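(* For every integer $n>1$, the set $H_n$ consists of $4n+1$ polynomials, each of total degree at most $\max(n,2)$ and with all coefficients in $\{0,\pm1\}$ and at most $4$ terms, and $H_n$ contains $S_n$ (so $(H_n)$ corresponds to an ideal of the Boolean ring $R_n/(S_n)$); yet for every admissible total-degree monomial ordering, every Gröbner basis of the ideal $(H_n)$ has at least $6n+3^n$ elements. Consequently the size of Gröbner bases of ideals in the Boolean rings $R_n/(S_n)$ is not bounded by any polynomial in the number, degrees and bitsizes of the input generators.
   Context: Let $R_n=\mathbb{F}_2[x_1,\ldots,x_n,y_1,\ldots,y_n,z_1,\ldots,z_n]$ with $\mathbb{F}_2=\mathbb{Z}/(2)$. For $S\subseteq R_n$, $(S)$ denotes the ideal generated by $S$. A total-degree ordering is an admissible monomial ordering that first compares total degrees. Define $S_n=\{c^2-c : c\in\{x_1,\ldots,x_n,y_1,\ldots,y_n,z_1,\ldots,z_n\}\}$, $L_n=\{x_iy_i+x_i+y_i-z_i : i=1,\ldots,n\}$, and $H_n=S_n\cup L_n\cup\{z_1z_2\cdots z_n\}$. The quotient $R_n/(S_n)$ is a Boolean ring (every element $r$ satisfies $r^2=r$), and ideals of $R_n/(S_n)$ correspond bijectively to ideals of $R_n$ containing $S_n$; Gröbner bases in the Boolean ring are understood as Gröbner bases in $R_n$ of ideals containing $S_n$. *)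

(* Defs.v *)
From HB Require Import structures.
From mathcomp Require Import all_boot all_order all_algebra.
Set Implicit Arguments. Unset Strict Implicit. Unset Printing Implicit Defensive.
Import GRing.Theory.

Definition mon (k : nat) := {ffun 'I_k -> nat}.

Definition mone (k : nat) : mon k := [ffun _ => 0%N].
Definition madd (k : nat) (a b : mon k) : mon k := [ffun i => (a i + b i)%N].
Definition msub (k : nat) (a b : mon k) : mon k := [ffun i => (a i - b i)%N].
Definition mdeg (k : nat) (a : mon k) : nat := (\sum_(i < k) a i)%N.
Definition mdiv (k : nat) (a b : mon k) : bool := [forall i, (a i <= b i)%N].

Definition mpoly (k : nat) := mon k -> 'F_2.
Definition pzero (k : nat) : mpoly k := fun _ => 0%R.
Arguments pzero : clear implicits.

Definition psum (k : nat) (ts : seq (mon k)) : mpoly k :=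
  fun m => ((count_mem m ts)%:R)%R.

Definition pmulm (k : nat) (t : mon k) (p : mpoly k) : mpoly k :=
  fun m => if mdiv t m then p (msub m t) else 0%R.

Definition pin (k : nat) (p : mpoly k) (s : seq (mpoly k)) : Prop :=
  exists i : 'I_(size s), nth (pzero k) s i = p.

(* f lies in the ideal generated by S: over the field F_2, f is an F_2-linear
   combination (coefficients 0/1) of monomial multiples t * s of generators s in S *)
Definition in_ideal (k : nat) (S : seq (mpoly k)) (f : mpoly k) : Prop :=
  exists l : seq (mon k * 'I_(size S)),
    forall m, f m = (\sum_(pr <- l) pmulm pr.1 (nth (pzero k) S pr.2) m)%R.

(* admissible monomial ordering: a total order, compatible with multiplication,
   with 1 as least element (hence a well-order, by Dickson's lemma) *)
Definition admissible (k : nat) (le : rel (mon k)) : Prop :=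
  [/\ reflexive le, transitive le, antisymmetric le & total le] /\
  (forall a b c, le a b -> le (madd a c) (madd b c)) /\
  (forall a, le (mone k) a).

Definition total_degree (k : nat) (le : rel (mon k)) : Prop :=
  forall a b, (mdeg a < mdeg b)%N -> ~~ le b a.

Definition is_lm (k : nat) (le : rel (mon k)) (p : mpoly k) (m : mon k) : Prop :=
  p m != 0%R /\ forall m', p m' != 0%R -> le m' m.

Definition is_groebner (k : nat) (le : rel (mon k)) (F G : seq (mpoly k)) : Prop :=
  (forall g, pin g G -> in_ideal F g) /\
  (forall f, in_ideal F f -> forall m, is_lm le f m ->
     exists g m', [/\ pin g G, is_lm le g m' & mdiv m' m]).

Definition at_least (k : nat) (N : nat) (G : seq (mpoly k)) : Prop :=
  exists f : 'I_N -> mpoly k, injective f /\ forall i, pin (f i) G.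

Definition deg_le (k : nat) (p : mpoly k) (d : nat) : Prop :=
  forall m, p m != 0%R -> (mdeg m <= d)%N.

Definition terms_le (k : nat) (p : mpoly k) (N : nat) : Prop :=
  exists ts : seq (mon k), (size ts <= N)%N /\ forall m, p m != 0%R -> m \in ts.

(* variables indexed by 'I_(3*n): x_i -> i, y_i -> n+i, z_i -> 2n+i (i : 'I_n) *)
Definition mx (n : nat) (i : 'I_n) : mon (3 * n) :=
  [ffun j : 'I_(3 * n) => nat_of_bool (nat_of_ord j == nat_of_ord i)].
Definition my (n : nat) (i : 'I_n) : mon (3 * n) :=
  [ffun j : 'I_(3 * n) => nat_of_bool (nat_of_ord j == n + i)%N].
Definition mz (n : nat) (i : 'I_n) : mon (3 * n) :=
  [ffun j : 'I_(3 * n) => nat_of_bool (nat_of_ord j == 2 * n + i)%N].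

Definition vars (n : nat) : seq (mon (3 * n)) :=
  [seq mx i | i <- enum 'I_n] ++ [seq my i | i <- enum 'I_n]
    ++ [seq mz i | i <- enum 'I_n].

(* S_n = { c^2 - c } ; over F_2, c^2 - c = c^2 + c *)
Definition Sn (n : nat) : seq (mpoly (3 * n)) :=
  [seq psum [:: madd c c; c] | c <- vars n].

(* L_n = { x_i y_i + x_i + y_i - z_i } ; over F_2, - z_i = z_i *)
Definition Ln (n : nat) : seq (mpoly (3 * n)) :=
  [seq psum [:: madd (mx i) (my i); mx i; my i; mz i] | i <- enum 'I_n].

Definition zprod (n : nat) : mon (3 * n) := \big[@madd _ / mone _]_(i < n) mz i.

Definition Hn (n : nat) : seq (mpoly (3 * n)) :=
  Sn n ++ Ln n ++ [:: psum [:: zprod n]].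

(* Main.v *)
Require Import Defs.
From Stdlib Require Import ClassicalEpsilon.
From HB Require Import structures.
From mathcomp Require Import all_boot all_order all_algebra zify.
Set Implicit Arguments. Unset Strict Implicit. Unset Printing Implicit Defensive.
Import GRing.Theory.

Section Basics.
Variable n : nat.
Local Notation M := (mon (3 * n)).

Lemma vidx_proof (k : 'I_3) (i : 'I_n) : (k * n + i < 3 * n)%N.
Proof. have := ltn_ord k; have := ltn_ord i; nia. Qed.

Definition vidx (k : 'I_3) (i : 'I_n) : 'I_(3 * n) := Ordinal (vidx_proof k i).
Definition ev (j : 'I_(3 * n)) : M := [ffun j' => nat_of_bool (j' == j)].
Definition co (m : M) k i := m (vidx k i).
Definition k0 : 'I_3 := @Ordinal 3 0 isT.
Definition k1 : 'I_3 := @Ordinal 3 1 isT.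
Definition k2 : 'I_3 := @Ordinal 3 2 isT.

Lemma vidx_inj k i k' i' : vidx k i = vidx k' i' -> k = k' /\ i = i'.
Proof.
move=> /(congr1 val) /= E.
have n0 : (0 < n)%N by case: n i {E} => [[]|].
have := congr1 (fun x => x %/ n)%N E; have := congr1 (fun x => x %% n)%N E => /=.
rewrite !modnMDl !modn_small // !divnMDl // !divn_small // !addn0 => Ei Ek.
by split; apply/val_inj.
Qed.

Lemma vidx_surj (j : 'I_(3 * n)) : exists k i, j = vidx k i.
Proof.
have n0 : (0 < n)%N by case: n j => [[]|].
have hk : (j %/ n < 3)%N by rewrite ltn_divLR //; exact: ltn_ord.
have hi : (j %% n < n)%N by rewrite ltn_mod.
exists (Ordinal hk), (Ordinal hi); apply/val_inj => /=.
by rewrite -divn_eq.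
Qed.

Lemma mon_eq (a b : M) : (forall k i, co a k i = co b k i) -> a = b.
Proof. by move=> H; apply/ffunP => j; have [k [i ->]] := vidx_surj j; apply: H. Qed.

Lemma co_ev k i k' i' : co (ev (vidx k' i')) k i = nat_of_bool ((k == k') && (i == i')).
Proof.
rewrite /co /ev ffunE; congr nat_of_bool.
apply/eqP/andP => [/vidx_inj [-> ->]|[/eqP -> /eqP ->]] //.
Qed.

Lemma co_madd a b k i : co (madd a b) k i = (co a k i + co b k i)%N.
Proof. by rewrite /co ffunE. Qed.

Lemma co_mone k i : co (mone _) k i = 0%N.
Proof. by rewrite /co ffunE. Qed.

Lemma maddC (a b : M) : madd a b = madd b a.
Proof. by apply/ffunP => j; rewrite !ffunE addnC. Qed.
Lemma maddA (a b c : M) : madd a (madd b c) = madd (madd a b) c.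
Proof. by apply/ffunP => j; rewrite !ffunE addnA. Qed.
Lemma madd0 (a : M) : madd a (mone _) = a.
Proof. by apply/ffunP => j; rewrite !ffunE addn0. Qed.
Lemma mad0d (a : M) : madd (mone _) a = a.
Proof. by apply/ffunP => j; rewrite !ffunE. Qed.

Lemma mdivP (a b : M) : reflect (forall k i, co a k i <= co b k i)%N (mdiv a b).
Proof.
apply: (iffP forallP) => H; first by move=> k i; apply: H.
by move=> j; have [k [i ->]] := vidx_surj j; apply: H.
Qed.

Lemma mdeg_madd (a b : M) : mdeg (madd a b) = (mdeg a + mdeg b)%N.
Proof. by rewrite /mdeg -big_split; apply: eq_bigr => j _; rewrite ffunE. Qed.

Lemma mdeg_ev j : mdeg (ev j) = 1%N.
Proof.
rewrite /mdeg (bigD1 j) //= big1 ?ffunE ?eqxx // => j' /negbTE H.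
by rewrite ffunE H.
Qed.

Definition dd (m : M) (i : 'I_n) := (co m k0 i + co m k1 i + co m k2 i)%N.

Lemma sum3 (F : 'I_3 -> nat) : (\sum_(k < 3) F k = F k0 + F k1 + F k2)%N.
Proof.
rewrite !big_ord_recl big_ord0 addn0 addnA.
by congr (F _ + F _ + F _)%N; apply/val_inj.
Qed.

Lemma mdeg_dd (m : M) : mdeg m = (\sum_(i < n) dd m i)%N.
Proof.
have n0j (j : 'I_(3 * n)) : (0 < n)%N by case: n j => [[]|].
have hinv_k (j : 'I_(3 * n)) : (j %/ n < 3)%N by rewrite ltn_divLR ?n0j //; exact: ltn_ord.
have hinv_i (j : 'I_(3 * n)) : (j %% n < n)%N by rewrite ltn_mod n0j.
pose h (p : 'I_3 * 'I_n) := vidx p.1 p.2.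
pose hi (j : 'I_(3 * n)) := (Ordinal (hinv_k j), Ordinal (hinv_i j)).
rewrite /mdeg (reindex h) /=; last first.
  exists hi => [[k i] _|j _].
    have n0 : (0 < n)%N by case: n i => [[]|].
    rewrite /hi /h; congr pair; apply/val_inj => /=.
      by rewrite divnMDl // divn_small // addn0.
    by rewrite modnMDl modn_small.
  by apply/val_inj => /=; rewrite -divn_eq.
rewrite -(pair_big xpredT xpredT (fun k i => co m k i)) /= exchange_big /=; apply: eq_bigr => i _.
by rewrite sum3.
Qed.

End Basics.
Section Poly.
Variable k : nat.
Local Notation M := (mon k).
Local Open Scope ring_scope.

Lemma natr_F2 (a : nat) : (a%:R : 'F_2) = (odd a)%:R.
Proof.
rewrite -{1}(odd_double_half a) natrD -muln2 natrM.
have -> : (2%:R : 'F_2) = 0 by apply/val_inj.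
by rewrite mulr0 addr0.
Qed.

Lemma F2_01 (x : 'F_2) : x = 0 \/ x = 1.
Proof. case: x => [[|[|j]] H]; [left|right|by []]; by apply/val_inj. Qed.

Lemma F2_add_same (x : 'F_2) : x + x = 0.
Proof. by case: (F2_01 x) => ->; [rewrite addr0|apply/val_inj]. Qed.

Lemma psum_cat (a b : seq M) m : psum (a ++ b) m = psum a m + psum b m.
Proof. by rewrite /psum count_cat natrD. Qed.

Lemma psum_cons x (a : seq M) m : psum (x :: a) m = (x == m)%:R + psum a m.
Proof. by rewrite /psum /= natrD. Qed.

Lemma madd_eqE (t x m : M) : (madd t x == m) = mdiv t m && (x == msub m t).
Proof.
apply/eqP/andP => [<-|[/forallP D /eqP ->]].
  split; first by apply/forallP => j; rewrite ffunE leq_addr.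
  by apply/eqP/ffunP => j; rewrite !ffunE addKn.
by apply/ffunP => j; rewrite !ffunE subnKC.
Qed.

Lemma pmulm_psum (t : M) (a : seq M) m :
  pmulm t (psum a) m = psum (map (madd t) a) m.
Proof.
rewrite /pmulm /psum count_map.
have -> : count (preim (madd t) (pred1 m)) a =
          count (fun x => mdiv t m && (x == msub m t)) a.
  by apply: eq_count => x /=; rewrite madd_eqE.
case: (mdiv t m) => //=.
by rewrite (@eq_count _ _ pred0) ?count_pred0.
Qed.

Lemma pmulm_mone (f : mpoly k) m : pmulm (mone k) f m = f m.
Proof.
rewrite /pmulm; have -> : mdiv (mone k) m by apply/forallP => j; rewrite ffunE.
by congr f; apply/ffunP => j; rewrite !ffunE subn0.
Qed.

Lemma pmulmA (t s : M) (f : mpoly k) m :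
  pmulm (madd t s) f m = pmulm t (pmulm s f) m.
Proof.
rewrite /pmulm; case: (boolP (mdiv t m)) => [/forallP Ht|Ht].
  have -> : mdiv (madd t s) m = mdiv s (msub m t).
    apply/forallP/forallP => H j; move: (H j) (Ht j); rewrite !ffunE.
      by move=> H1 H2; rewrite leq_subRL.
    by move=> H1 H2; rewrite -leq_subRL.
  case: ifP => // _; congr f; apply/ffunP => j; rewrite !ffunE subnDA //.
case: ifP => // /forallP H; case/negP: Ht; apply/forallP => j.
by move: (H j); rewrite ffunE => /(leq_trans (leq_addr _ _)).
Qed.

Lemma in_ideal_ext (S : seq (mpoly k)) (f g : mpoly k) :
  (forall m, f m = g m) -> in_ideal S g -> in_ideal S f.
Proof. by move=> E [l Hl]; exists l => m; rewrite E Hl. Qed.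

Lemma in_ideal_add (S : seq (mpoly k)) (f g : mpoly k) :
  in_ideal S f -> in_ideal S g -> in_ideal S (fun m => f m + g m).
Proof.
by move=> [l1 H1] [l2 H2]; exists (l1 ++ l2) => m; rewrite big_cat /= H1 H2.
Qed.

Lemma in_ideal_mul (S : seq (mpoly k)) (f : mpoly k) t :
  in_ideal S f -> in_ideal S (pmulm t f).
Proof.
move=> [l Hl]; exists [seq (madd t pr.1, pr.2) | pr <- l] => m.
rewrite big_map /=.
under [in RHS]eq_bigr => pr _ do rewrite pmulmA.
rewrite /pmulm; case: ifP => _; last by rewrite big1.
rewrite Hl; apply: eq_bigr => pr _; by [].
Qed.

Lemma in_ideal_gen (S : seq (mpoly k)) (i : 'I_(size S)) :
  in_ideal S (nth (pzero k) S i).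
Proof. by exists [:: (mone k, i)] => m; rewrite big_cons big_nil addr0 pmulm_mone. Qed.

Lemma in_ideal_0 (S : seq (mpoly k)) : in_ideal S (pzero k).
Proof. by exists [::] => m; rewrite big_nil. Qed.

End Poly.
Section Gens.
Variable n : nat.
Local Notation M := (mon (3 * n)).

Lemma mx_ev (i : 'I_n) : mx i = ev (vidx k0 i).
Proof. apply/ffunP => j; rewrite /mx /ev !ffunE; congr nat_of_bool; by rewrite -[RHS]val_eqE /= ?mul0n ?add0n ?mul1n. Qed.
Lemma my_ev (i : 'I_n) : my i = ev (vidx k1 i).
Proof. apply/ffunP => j; rewrite /my /ev !ffunE; congr nat_of_bool; by rewrite -[RHS]val_eqE /= ?mul0n ?add0n ?mul1n. Qed.
Lemma mz_ev (i : 'I_n) : mz i = ev (vidx k2 i).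
Proof. apply/ffunP => j; rewrite /mz /ev !ffunE; congr nat_of_bool; by rewrite -[RHS]val_eqE /= ?mul0n ?add0n ?mul1n. Qed.

Lemma co_big (I : Type) (r : seq I) (P : pred I) (F : I -> M) (kk : 'I_3) (i : 'I_n) :
  co (\big[@madd _/mone _]_(x <- r | P x) F x) kk i = (\sum_(x <- r | P x) co (F x) kk i)%N.
Proof.
apply: (big_morph (fun m => co m kk i)) => [a b|]; [exact: co_madd|exact: co_mone].
Qed.

Lemma co_zprod (kk : 'I_3) (i : 'I_n) : co (zprod n) kk i = nat_of_bool (kk == k2).
Proof.
rewrite /zprod co_big (bigD1 i) //= big1 ?addn0.
  by rewrite mz_ev co_ev eqxx andbT.
by move=> j /negbTE H; rewrite mz_ev co_ev [i == j]eq_sym H andbF.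
Qed.

Definition HS : seq (seq M) :=
  [seq [:: madd c c; c] | c <- vars n] ++
  [seq [:: madd (mx i) (my i); mx i; my i; mz i] | i <- enum 'I_n] ++
  [:: [:: zprod n]].

Lemma Hn_HS : Hn n = map (@psum _) HS.
Proof. by rewrite /Hn /HS /Sn /Ln !map_cat -!map_comp. Qed.

Lemma size_vars : size (vars n) = (3 * n)%N.
Proof. rewrite /vars !size_cat !size_map -!enumT -!cardT !card_ord. by rewrite !mulSn mul0n addn0. Qed.

Lemma size_Hn : size (Hn n) = (4 * n + 1)%N.
Proof.
rewrite /Hn !size_cat /Sn /Ln !size_map size_vars -!enumT -!cardT !card_ord /=.
by rewrite !mulSn mul0n !addn0 !addnA.
Qed.

Lemma size_HS : size HS = size (Hn n).
Proof. by rewrite Hn_HS size_map. Qed.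

Lemma nth_Hn (j : nat) : (j < size HS)%N ->
  nth (pzero _) (Hn n) j = psum (nth [::] HS j).
Proof. by move=> H; rewrite Hn_HS (nth_map [::]) // size_HS. Qed.

Lemma in_ideal_HS (hs : seq M) : hs \in HS -> in_ideal (Hn n) (psum hs).
Proof.
move=> H; have Hi : (index hs HS < size (Hn n))%N by rewrite -size_HS index_mem.
apply: (in_ideal_ext _ (in_ideal_gen (Ordinal Hi))) => m /=.
by rewrite nth_Hn ?size_HS // nth_index.
Qed.

Lemma vars_ev (c : M) : c \in vars n -> exists (kk : 'I_3) (i : 'I_n), c = ev (vidx kk i).
Proof.
rewrite /vars !mem_cat => /or3P [] /mapP [i _ ->].
- by exists k0, i; rewrite mx_ev.
- by exists k1, i; rewrite my_ev.
- by exists k2, i; rewrite mz_ev.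
Qed.

Lemma HS_cases (hs : seq M) : hs \in HS ->
  [\/ exists (kk : 'I_3) (i : 'I_n), hs = [:: madd (ev (vidx kk i)) (ev (vidx kk i)); ev (vidx kk i)],
      exists i : 'I_n, hs = [:: madd (ev (vidx k0 i)) (ev (vidx k1 i)); ev (vidx k0 i);
                          ev (vidx k1 i); ev (vidx k2 i)]
    | hs = [:: zprod n]].
Proof.
rewrite /HS !mem_cat => /or3P [].
- by move=> /mapP [c /vars_ev [kk [i ->]] ->]; apply: Or31; exists kk, i.
- by move=> /mapP [i _ ->]; apply: Or32; exists i; rewrite mx_ev my_ev mz_ev.
- by rewrite inE => /eqP ->; apply: Or33.
Qed.

End Gens.
Definition FF (a b c : nat) (px py pz : bool) : bool :=
  if (0 < a)%N then px else if (0 < b)%N then py else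
  if (0 < c)%N then (pz && ~~ px && ~~ py) || (px && py)
  else ~~ px && ~~ py && ~~ pz.

Lemma FF_nat a b c x y z : (a + b + c <= 1)%N ->
  FF a b c (0 < x)%N (0 < y)%N (0 < z)%N ->
  (a + b + c <= x + y + z)%N /\
  ((x + y + z <= a + b + c)%N -> [/\ x = a, y = b & z = c]).
Proof.
rewrite /FF => H; case: (ltnP 0 a) => Ha; [|case: (ltnP 0 b) => Hb;
  [|case: (ltnP 0 c) => Hc]].
- move=> Hx; split; [lia|move=> ?; split; lia].
- move=> Hy; split; [lia|move=> ?; split; lia].
- move=> /orP [/andP [/andP [Hz Hx] Hy]|/andP [Hx Hy]]; split; try lia.
  move=> ?; split; lia.
- move=> /andP [/andP [Hx Hy] Hz]; split; [lia|move=> ?; split; lia].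
Qed.

Lemma FF_self a b c : (a + b + c <= 1)%N -> FF a b c (0 < a)%N (0 < b)%N (0 < c)%N.
Proof.
rewrite /FF => H; case: (ltnP 0 a) => Ha //; case: (ltnP 0 b) => Hb //.
case: (ltnP 0 c) => Hc //=; rewrite andbT; apply/negP; lia.
Qed.

Lemma FF_L a b c px py pz :
  ((FF a b c true true pz)%:R + (FF a b c true py pz)%:R +
   (FF a b c px true pz)%:R + (FF a b c px py true)%:R : 'F_2)%R = 0%R.
Proof.
rewrite /FF; case: (0 < a)%N; case: (0 < b)%N; case: (0 < c)%N;
  case: px; case: py; case: pz; by apply/val_inj.
Qed.

Lemma sum_eq_pointwise (I : finType) (a b : I -> nat) :
  (forall i, b i <= a i)%N -> (\sum_i a i <= \sum_i b i)%N -> forall i, a i = b i.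
Proof.
move=> Hab Hs i; apply/eqP; rewrite eqn_leq Hab andbT; apply/contraT => Hlt.
have : (\sum_i b i < \sum_i a i)%N.
  rewrite (bigD1 i) //= [X in (_ < X)%N](bigD1 i) //=.
  rewrite -addSn leq_add //; first by rewrite ltnNge.
  
  by apply: leq_sum => j _; apply: Hab.
by rewrite ltnNge Hs.
Qed.

Lemma I3_cases (kk : 'I_3) : [\/ kk = k0, kk = k1 | kk = k2].
Proof.
case: kk => [[|[|[|j]]] H].
- by apply: Or31; apply/val_inj.
- by apply: Or32; apply/val_inj.
- by apply: Or33; apply/val_inj.
- by [].
Qed.

Lemma pos2 x (b : bool) : (0 < x + (b + b))%N = (0 < x + b)%N.
Proof. by case: b; rewrite /= ?addn0 ?addn2 ?addn1 ?addnS. Qed.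

Section Key.
Variable n : nat.
Local Notation M := (mon (3 * n)).
Variable mt : M.
Hypothesis Hs1 : forall i, (dd mt i <= 1)%N.
Hypothesis Hs0 : exists i0, dd mt i0 = 0%N.
Local Open Scope ring_scope.

Definition Fi (u : M) i := FF (co mt k0 i) (co mt k1 i) (co mt k2 i)
   (0 < co u k0 i)%N (0 < co u k1 i)%N (0 < co u k2 i)%N.

Definition phi (u : M) : 'F_2 := \prod_(i < n) (Fi u i)%:R.

Lemma phi_mt : phi mt = 1.
Proof. by rewrite /phi big1 // => i _; rewrite /Fi FF_self // Hs1. Qed.

Lemma factA u : phi u != 0 -> (mdeg u <= mdeg mt)%N -> u = mt.
Proof.
move=> /prodf_neq0 H Hd.
have HF i : Fi u i by have := H i isT; case: (Fi u i).
have H1 i := @FF_nat (co mt k0 i) (co mt k1 i) (co mt k2 i) (co u k0 i) (co u k1 i) (co u k2 i) (Hs1 i) (HF i).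
rewrite !mdeg_dd in Hd.
have E := sum_eq_pointwise (fun i => (H1 i).1) Hd.
apply: mon_eq => kk i; have [Ex Ey Ez] := (H1 i).2 (eq_leq (E i)).
by case: (I3_cases kk) => ->.
Qed.

Lemma phi_split (i0 : 'I_n) (t s : M) :
  (forall kk i, i != i0 -> co s kk i = 0%N) ->
  phi (madd t s) = (Fi (madd t s) i0)%:R * \prod_(i < n | i != i0) (Fi t i)%:R.
Proof.
move=> Hs; rewrite /phi (bigD1 i0) //=; congr (_ * _).
apply: eq_bigr => i Hi; rewrite /Fi !co_madd !Hs // !addn0 //.
Qed.

Lemma gen_sum (hs : seq M) t : hs \in HS n -> \sum_(s <- hs) phi (madd t s) = 0.
Proof.
case/HS_cases => [[kk [i0 ->]]|[i0 ->]|->].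
- have Hc s : s \in [:: madd (ev (vidx kk i0)) (ev (vidx kk i0)); ev (vidx kk i0)] ->
      forall kk' i, i != i0 -> co s kk' i = 0%N.
    rewrite !inE => /orP [] /eqP -> kk' i Hi; rewrite ?co_madd co_ev (negbTE Hi) andbF //.
  rewrite big_cons big_cons big_nil addr0.
  rewrite (@phi_split i0 t _ (Hc _ (mem_head _ _))) (@phi_split i0 t _ (Hc _ (mem_last _ _))).
  suff -> : Fi (madd t (madd (ev (vidx kk i0)) (ev (vidx kk i0)))) i0 =
            Fi (madd t (ev (vidx kk i0))) i0 by rewrite -mulrDl F2_add_same mul0r.
  by rewrite /Fi !co_madd !co_ev !eqxx !andbT !pos2.
- set hs4 := [:: _; _; _; _].
  have Hc s : s \in hs4 -> forall kk' i, i != i0 -> co s kk' i = 0%N.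
    rewrite !inE => /or4P [] /eqP -> kk' i Hi;
      rewrite ?co_madd !co_ev (negbTE Hi) !andbF //.
  rewrite big_seq_cond (eq_bigr (fun s => (Fi (madd t s) i0)%:R *
      \prod_(i < n | i != i0) (Fi t i)%:R)); last first.
    by move=> s /andP [Hs _]; apply: (@phi_split i0 t s (Hc s Hs)).
  rewrite -big_seq_cond -big_distrl /= !big_cons big_nil addr0.
  rewrite /Fi !co_madd !co_ev !eqxx /=.
  rewrite !addn0 ?addn1 ?addn2 /= ?addnS /=.
  set a := co mt k0 i0; set b := co mt k1 i0; set c := co mt k2 i0.
  rewrite !addrA.
  by rewrite (FF_L a b c (0 < co t k0 i0)%N (0 < co t k1 i0)%N (0 < co t k2 i0)%N) mul0r.
- rewrite big_cons big_nil addr0; have [i0 Hi0] := Hs0.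
  rewrite /phi (bigD1 i0) //=.
  suff -> : Fi (madd t (zprod n)) i0 = false by rewrite mul0r.
  move: Hi0; rewrite /dd /Fi => Hi0.
  have -> : co mt k0 i0 = 0%N by lia.
  have -> : co mt k1 i0 = 0%N by lia.
  have -> : co mt k2 i0 = 0%N by lia.
  by rewrite /FF /= !co_madd !co_zprod /= addn1 /= andbF.
Qed.

Lemma key (le : rel M) : total_degree le ->
  forall g, in_ideal (Hn n) g -> ~ is_lm le g mt.
Proof.
move=> Htd g [l Hl] [Hne Hmax].
pose L := flatten [seq map (madd pr.1) (nth [::] (HS n) pr.2) | pr : M * 'I_(size (Hn n)) <- l].
have E0 (l' : seq (M * 'I_(size (Hn n)))) m :
    \sum_(pr <- l') pmulm pr.1 (nth (pzero _) (Hn n) pr.2) m =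
    psum (flatten [seq map (madd pr.1) (nth [::] (HS n) pr.2) | pr : M * 'I_(size (Hn n)) <- l']) m.
  elim: l' => [|pr l' IH]; first by rewrite big_nil /psum.
  rewrite big_cons /= psum_cat IH; congr (_ + _).
  by rewrite nth_Hn ?size_HS // pmulm_psum.
have E1 m : g m = psum L m by rewrite Hl E0.
have E2 : \sum_(u <- L) phi u = 0.
  rewrite big_flatten /= big_map big1 // => pr _.
  rewrite big_map; apply: gen_sum; apply: mem_nth; rewrite size_HS; exact: ltn_ord.
have E3 : \sum_(u <- L) phi u = \sum_(u <- undup L) g u * (u == mt)%:R.
  rewrite -big_undup_iterop_count; apply: eq_big_seq => u; rewrite mem_undup => HuL.
  rewrite Monoid.iteropE iter_addr_0 -[phi u *+ _]mulr_natr mulrC.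
  have -> : ((count_mem u L)%:R : 'F_2) = psum L u by [].
  rewrite -E1; case: (F2_01 (g u)) => [->|Hg]; first by rewrite !mul0r.
  have Hd : (mdeg u <= mdeg mt)%N.
    rewrite leqNgt; apply/negP => /Htd; rewrite Hmax //.
    by rewrite Hg; apply/eqP => /(congr1 val).
  case: (F2_01 (phi u)) => Hp.
    case: eqP => [Eu|]; last by rewrite Hp.
    by move: Hp; rewrite Eu phi_mt => /(congr1 val).
  have /factA -> // : phi u != 0 by rewrite Hp; apply/eqP => /(congr1 val).
  by rewrite eqxx phi_mt.
have Hin : mt \in undup L.
  rewrite mem_undup -has_pred1 has_count lt0n; apply/negP => /eqP C.
  by move: Hne; rewrite E1 /psum C eqxx.
move: E2; rewrite E3 (bigD1_seq mt) ?undup_uniq //= eqxx mulr1 big1_seq.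
  by rewrite addr0 => E; move: Hne; rewrite E eqxx.
by move=> u /andP [/negbTE -> _]; rewrite mulr0.
Qed.

End Key.
Section LmHead.
Variable k : nat.
Local Open Scope ring_scope.

Lemma psum_neq0_mem (L : seq (mon k)) m : psum L m != 0 -> m \in L.
Proof.
rewrite /psum -has_pred1 has_count; by case: (count _ _); rewrite ?eqxx.
Qed.

Lemma psum_head (M0 : mon k) L' :
  (forall u, u \in L' -> (mdeg u < mdeg M0)%N) -> psum (M0 :: L') M0 = 1.
Proof.
move=> H; rewrite psum_cons eqxx /psum.
have -> : count_mem M0 L' = 0%N.
  by apply/count_memPn; apply/negP => /H; rewrite ltnn.
by rewrite addr0.
Qed.

Lemma lm_head (le : rel (mon k)) (M0 : mon k) L' :
  reflexive le -> total le -> total_degree le ->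
  (forall u, u \in L' -> (mdeg u < mdeg M0)%N) -> is_lm le (psum (M0 :: L')) M0.
Proof.
move=> Hr Ht Htd H; split; first by rewrite psum_head // oner_eq0.
move=> m' /psum_neq0_mem; rewrite inE => /orP [/eqP -> //|/H /Htd Hn].
by case/orP: (Ht m' M0) => // H'; rewrite H' in Hn.
Qed.

Lemma lm_unique (le : rel (mon k)) (g : mpoly k) a b :
  antisymmetric le -> is_lm le g a -> is_lm le g b -> a = b.
Proof.
move=> Has [Ha Ha'] [Hb Hb']; apply: Has; by rewrite Ha' // Hb'.
Qed.

End LmHead.

Section Members.
Variable n : nat.
Local Notation M := (mon (3 * n)).
Local Open Scope ring_scope.

Lemma ev_in_vars (kk : 'I_3) (i : 'I_n) : ev (vidx kk i) \in vars n.
Proof.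
rewrite /vars !mem_cat; case: (I3_cases kk) => ->.
- by rewrite -mx_ev map_f // ?mem_enum ?enumT ?mem_enum.
- by rewrite -my_ev map_f ?orbT // ?mem_enum ?enumT ?mem_enum.
- by rewrite -mz_ev map_f ?orbT // ?mem_enum ?enumT ?mem_enum.
Qed.

Lemma sq_in_HS (kk : 'I_3) (i : 'I_n) :
  [:: madd (ev (vidx kk i)) (ev (vidx kk i)); ev (vidx kk i)] \in HS n.
Proof.
rewrite /HS mem_cat; apply/orP; left.
exact: (map_f (fun c => [:: madd c c; c]) (ev_in_vars kk i)).
Qed.

Lemma L_in_HS (i : 'I_n) :
  [:: madd (ev (vidx k0 i)) (ev (vidx k1 i)); ev (vidx k0 i); ev (vidx k1 i); ev (vidx k2 i)]
    \in HS n.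
Proof.
rewrite /HS !mem_cat -mx_ev -my_ev -mz_ev; apply/orP; right; apply/orP; left.
apply: (map_f (fun i => [:: madd (mx i) (my i); mx i; my i; mz i])).
by rewrite ?mem_enum ?enumT ?mem_enum.
Qed.

Lemma z_in_HS : [:: zprod n] \in HS n.
Proof. by rewrite /HS !mem_cat inE eqxx !orbT. Qed.

Lemma wz_core (x y z : M) :
  in_ideal (Hn n) (psum [:: madd x y; x; y; z]) ->
  in_ideal (Hn n) (psum [:: madd x x; x]) ->
  in_ideal (Hn n) (psum [:: madd x z; x]).
Proof.
move=> HL HS.
have H := in_ideal_add (in_ideal_add (in_ideal_mul x HL) (in_ideal_mul y HS)) HS.
apply: (in_ideal_ext _ H) => m /=.
rewrite !pmulm_psum /= !psum_cons /psum /= addr0.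
have -> : madd y (madd x x) = madd x (madd x y).
  by rewrite maddA [madd y x]maddC -maddA [madd y x]maddC.
rewrite [madd y x]maddC.
move: (madd x z == m) (x == m) (madd x (madd x y) == m) (madd x x == m) (madd x y == m).
by case; case; case; case; case; apply/val_inj.
Qed.

Lemma mem_xz (i : 'I_n) :
  in_ideal (Hn n) (psum [:: madd (ev (vidx k0 i)) (ev (vidx k2 i)); ev (vidx k0 i)]).
Proof.
apply: (wz_core (y := ev (vidx k1 i))); apply: in_ideal_HS.
  exact: L_in_HS.
exact: sq_in_HS.
Qed.

Lemma mem_yz (i : 'I_n) :
  in_ideal (Hn n) (psum [:: madd (ev (vidx k1 i)) (ev (vidx k2 i)); ev (vidx k1 i)]).
Proof.
apply: (wz_core (y := ev (vidx k0 i))); last by apply: in_ideal_HS; exact: sq_in_HS.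
apply: (in_ideal_ext _ (in_ideal_HS (L_in_HS i))) => m.
rewrite !psum_cons maddC.
by rewrite [X in _ + X = _]addrCA.
Qed.

End Members.
Section Cong.
Variable n : nat.
Local Notation M := (mon (3 * n)).
Local Open Scope ring_scope.

Definition cong (a b : M) := in_ideal (Hn n) (fun m => psum [:: a] m + psum [:: b] m).

Lemma cong_refl a : cong a a.
Proof. by apply: (in_ideal_ext _ (@in_ideal_0 _ (Hn n))) => m; rewrite F2_add_same. Qed.

Lemma cong_trans a b c : cong a b -> cong b c -> cong a c.
Proof.
move=> H1 H2; apply: (in_ideal_ext _ (in_ideal_add H1 H2)) => m.
by rewrite addrA -[psum _ m + _ + _]addrA F2_add_same addr0.
Qed.

Lemma cong_mul t a b : cong a b -> cong (madd t a) (madd t b).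
Proof.
move=> H; apply: (in_ideal_ext _ (in_ideal_mul t H)) => m.
rewrite /pmulm; case: ifP => Hd.
  by rewrite -!(pmulm_psum t [:: _]) /pmulm Hd.
rewrite /psum /= !addn0.
have E (c : M) : (madd t c == m) = false.
  by rewrite madd_eqE Hd.
by rewrite !E addr0.
Qed.

Lemma cong_big (r : seq 'I_n) (F G : 'I_n -> M) : (forall i, cong (F i) (G i)) ->
  cong (\big[@madd _/mone _]_(i <- r) F i) (\big[@madd _/mone _]_(i <- r) G i).
Proof.
move=> H; elim: r => [|a r IH]; first by rewrite !big_nil; exact: cong_refl.
rewrite !big_cons; apply: (cong_trans (b := madd (G a) (\big[@madd _/mone _]_(i <- r) F i))).
  rewrite [madd (F a) _]maddC [madd (G a) _]maddC; exact: cong_mul.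
exact: cong_mul.
Qed.

Definition Pw (w : {ffun 'I_n -> 'I_3}) : M := \big[@madd _/mone _]_(i < n) ev (vidx (w i) i).

Lemma co_Pw w kk i : co (Pw w) kk i = nat_of_bool (kk == w i).
Proof.
rewrite /Pw co_big (bigD1 i) //= big1 ?addn0.
  by rewrite co_ev eqxx andbT.
by move=> j /negbTE H; rewrite co_ev [i == j]eq_sym H andbF.
Qed.

Lemma cong_zvar (kk : 'I_3) (i : 'I_n) :
  cong (ev (vidx kk i)) (madd (ev (vidx kk i)) (ev (vidx k2 i))).
Proof.
case: (I3_cases kk) => ->.
- apply: (in_ideal_ext _ (mem_xz i)) => m; rewrite !psum_cons /psum /= !addr0 addrC //.
- apply: (in_ideal_ext _ (mem_yz i)) => m; rewrite !psum_cons /psum /= !addr0 addrC //.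
- apply: (in_ideal_ext _ (in_ideal_HS (sq_in_HS k2 i))) => m.
  by rewrite !psum_cons /psum /= !addr0 addrC.
Qed.

Lemma mem_Pw w : in_ideal (Hn n) (psum [:: Pw w]).
Proof.
pose Q := \big[@madd _/mone _]_(i < n) madd (ev (vidx (w i) i)) (ev (vidx k2 i)).
have HQ : cong (Pw w) Q by apply: cong_big => i; exact: cong_zvar.
have EQ : Q = madd (Pw w) (zprod n).
  apply: mon_eq => kk i; rewrite co_madd /Q /Pw /zprod !co_big -big_split /=.
  by apply: eq_bigr => j _; rewrite co_madd mz_ev.
have HQi : in_ideal (Hn n) (psum [:: Q]).
  apply: (in_ideal_ext _ (in_ideal_mul (Pw w) (in_ideal_HS (z_in_HS n)))) => m.
  by rewrite pmulm_psum EQ.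
apply: (in_ideal_ext _ (in_ideal_add HQ HQi)) => m /=.
by rewrite -addrA F2_add_same addr0.
Qed.

End Cong.
Definition pa (j : 'I_6) : 'I_3 :=
  match val j with 0 | 3 | 4 => k0 | 1 | 5 => k1 | _ => k2 end.
Definition pb (j : 'I_6) : 'I_3 :=
  match val j with 0 => k0 | 1 | 3 => k1 | _ => k2 end.

Lemma pab_le j : (pa j <= pb j)%N.
Proof. by case: j => [[|[|[|[|[|[|?]]]]]] ?]. Qed.

Lemma pab_inj j j' : pa j = pa j' -> pb j = pb j' -> j = j'.
Proof.
move=> E1 E2; apply/val_inj; move: E1 E2.
case: j => [[|[|[|[|[|[|?]]]]]] ?] //; case: j' => [[|[|[|[|[|[|?]]]]]] ?] //=;
  move=> /(congr1 val) /= E1 /(congr1 val) /= E2; lia.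
Qed.

Section Main.
Variable n : nat.
Hypothesis hn : (1 < n)%N.
Local Notation M := (mon (3 * n)).
Local Open Scope ring_scope.

Lemma other (i : 'I_n) : exists i1 : 'I_n, i1 != i.
Proof.
have h1 : (1 < n)%N := hn. have h0 : (0 < n)%N by lia.
case: (eqVneq (val i) 0%N) => Hi.
  by exists (Ordinal h1); rewrite -val_eqE /= Hi.
by exists (Ordinal h0); rewrite -val_eqE /= eq_sym.
Qed.

Definition Slike (m : M) := (forall i, (dd m i <= 1)%N) /\ exists i, dd m i = 0%N.

Lemma divS_pair (a b : 'I_3) (i0 : 'I_n) (m : M) :
  mdiv m (madd (ev (vidx a i0)) (ev (vidx b i0))) ->
  m != madd (ev (vidx a i0)) (ev (vidx b i0)) -> Slike m.
Proof.
set P := madd _ _; move=> /mdivP D Hne.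
have Z i kk : i != i0 -> co m kk i = 0%N.
  by move=> Hi; move: (D kk i); rewrite /P co_madd !co_ev (negbTE Hi) !andbF; lia.
have [i1 Hi1] := other i0.
split; last by exists i1; rewrite /dd !Z.
move=> i; case: (eqVneq i i0) => [->|Hi]; last by rewrite /dd !Z.
rewrite leqNgt; apply/negP => H2; case/negP: Hne; apply/eqP; apply: mon_eq => kk i2.
case: (eqVneq i2 i0) => [->|Hi2]; last by rewrite Z // /P co_madd !co_ev (negbTE Hi2) !andbF.
move: (D k0 i0) (D k1 i0) (D k2 i0) H2; rewrite /dd /P !co_madd !co_ev !eqxx !andbT.
by case: (I3_cases a) => ->; case: (I3_cases b) => ->; case: (I3_cases kk) => -> /=; lia.
Qed.

Lemma divS_prod w (m : M) : mdiv m (Pw w) -> m != Pw w -> Slike m.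
Proof.
move=> /mdivP D Hne.
have Dk kk i : (co m kk i <= nat_of_bool (kk == w i))%N by rewrite -co_Pw.
have S1 i : (dd m i <= 1)%N.
  by move: (Dk k0 i) (Dk k1 i) (Dk k2 i); rewrite /dd; case: (I3_cases (w i)) => -> /=; lia.
split => //; case: (boolP [exists i, dd m i == 0%N]) => [/existsP [i /eqP]|/existsPn H].
  by exists i.
case/negP: Hne; apply/eqP; apply: mon_eq => kk i; rewrite co_Pw.
move: (H i) (Dk k0 i) (Dk k1 i) (Dk k2 i); rewrite /dd.
by case: (I3_cases (w i)) => ->; case: (I3_cases kk) => -> /=; lia.
Qed.

Definition TT := (('I_6 * 'I_n) + {ffun 'I_n -> 'I_3})%type.

Definition Phi (t : TT) : M :=
  match t with
  | inl (j, i) => madd (ev (vidx (pa j) i)) (ev (vidx (pb j) i))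
  | inr w => Pw w
  end.

Lemma card_TT : #|{: TT}| = (6 * n + 3 ^ n)%N.
Proof. by rewrite card_sum card_prod card_ffun !card_ord. Qed.

Lemma pair_inj (a b a' b' : 'I_3) (i i' : 'I_n) : (a <= b)%N -> (a' <= b')%N ->
  madd (ev (vidx a i)) (ev (vidx b i)) = madd (ev (vidx a' i')) (ev (vidx b' i')) ->
  [/\ a = a', b = b' & i = i'].
Proof.
move=> Hab Hab' E; have C kk j := congr1 (fun m => co m kk j) E.
case: (eqVneq i i') => [Ei|Hi]; last first.
  by move: (C a i); rewrite /= !co_madd !co_ev !eqxx (negbTE Hi) !andbF /=; lia.
subst i'; move: (C k0 i) (C k1 i) (C k2 i) Hab Hab'; rewrite /= !co_madd !co_ev !eqxx !andbT.
by case: (I3_cases a) => ->; case: (I3_cases b) => ->; case: (I3_cases a') => ->;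
  case: (I3_cases b') => -> //=; lia.
Qed.

Lemma Phi_inj : injective Phi.
Proof.
have PP (j : 'I_6) (i : 'I_n) (w : {ffun 'I_n -> 'I_3}) : madd (ev (vidx (pa j) i)) (ev (vidx (pb j) i)) <> Pw w.
  move=> E; have [i1 Hi1] := other i.
  have := congr1 (fun m => dd m i1) E; rewrite /dd /= !co_madd !co_ev !co_Pw (negbTE Hi1) !andbF.
  by case: (I3_cases (w i1)) => ->.
case=> [[j i]|w] [[j' i']|w'] /= E.
- have [E1 E2 E3] := pair_inj (pab_le j) (pab_le j') E.
  by rewrite (pab_inj E1 E2) E3.
- by case: (PP _ _ _ E).
- by case: (PP _ _ _ (esym E)).
- congr inr; apply/ffunP => i.
  have := congr1 (fun m => co m (w i) i) E; rewrite /= !co_Pw eqxx.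
  by case: eqP.
Qed.

Lemma exA (le : rel M) : admissible le -> total_degree le ->
  forall t, exists f, in_ideal (Hn n) f /\ is_lm le f (Phi t).
Proof.
move=> [[Hr _ _ Ht] _] Htd t.
have Hlm := lm_head (k := 3 * n) Hr Ht Htd.
have d1 kk i : mdeg (ev (vidx kk i)) = 1%N := mdeg_ev _.
case: t => [[j i]|w]; last first.
  by exists (psum [:: Pw w]); split; [exact: mem_Pw|apply: Hlm => u; rewrite in_nil].
case: j => [[|[|[|[|[|[|?]]]]]] Hj] //=; rewrite /pa /pb /=.
- exists (psum [:: madd (ev (vidx k0 i)) (ev (vidx k0 i)); ev (vidx k0 i)]); split.
    by apply: in_ideal_HS; exact: sq_in_HS.
  by apply: Hlm => u; rewrite inE => /eqP ->; rewrite mdeg_madd !d1.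
- exists (psum [:: madd (ev (vidx k1 i)) (ev (vidx k1 i)); ev (vidx k1 i)]); split.
    by apply: in_ideal_HS; exact: sq_in_HS.
  by apply: Hlm => u; rewrite inE => /eqP ->; rewrite mdeg_madd !d1.
- exists (psum [:: madd (ev (vidx k2 i)) (ev (vidx k2 i)); ev (vidx k2 i)]); split.
    by apply: in_ideal_HS; exact: sq_in_HS.
  by apply: Hlm => u; rewrite inE => /eqP ->; rewrite mdeg_madd !d1.
- eexists; split; first by apply: in_ideal_HS; exact: L_in_HS.
  by apply: Hlm => u; rewrite !inE => /or3P [] /eqP ->; rewrite mdeg_madd !d1.
- eexists; split; first exact: mem_xz.
  by apply: Hlm => u; rewrite !inE => /eqP ->; rewrite mdeg_madd !d1.
- eexists; split; first exact: mem_yz.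
  by apply: Hlm => u; rewrite !inE => /eqP ->; rewrite mdeg_madd !d1.
Qed.

Lemma divS (t : TT) (m : M) : mdiv m (Phi t) -> m != Phi t -> Slike m.
Proof. by case: t => [[j i]|w] /=; [exact: divS_pair|exact: divS_prod]. Qed.

Lemma gb_bound (le : rel M) : admissible le -> total_degree le ->
  forall G, is_groebner le (Hn n) G -> at_least (6 * n + 3 ^ n) G.
Proof.
move=> Hadm Htd G [HG1 HG2].
have Hall t : exists g, pin g G /\ is_lm le g (Phi t).
  have [f [Hf Hlm]] := exA Hadm Htd t.
  have [g [m'' [Hg Hlmg Hdiv]]] := HG2 f Hf _ Hlm.
  exists g; split => //.
  case: (eqVneq m'' (Phi t)) => [<- //|Hne].
  have [S1 S0] := divS Hdiv Hne.
  by case: (key S1 S0 Htd (HG1 g Hg) Hlmg).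
pose F t := proj1_sig (constructive_indefinite_description _ (Hall t)).
have HF t : pin (F t) G /\ is_lm le (F t) (Phi t).
  exact: (proj2_sig (constructive_indefinite_description _ (Hall t))).
have Has : antisymmetric le by case: Hadm => [[]].
exists (fun i => F (enum_val (cast_ord (esym card_TT) i))); split.
  move=> i1 i2 /= E.
  have H2 := (HF (enum_val (cast_ord (esym card_TT) i2))).2; rewrite -E in H2.
  have E' := lm_unique Has (HF _).2 H2.
  by move/Phi_inj/enum_val_inj/cast_ord_inj: E'.
by move=> i; exact: (HF _).1.
Qed.

End Main.
Section Gens2.
Variable n : nat.
Hypothesis hn : (1 < n)%N.
Local Notation M := (mon (3 * n)).
Local Open Scope ring_scope.

Lemma HS_head (hs : seq M) : hs \in HS n ->
  exists h L', hs = h :: L' /\ forall u, u \in L' -> (mdeg u < mdeg h)%N.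
Proof.
case/HS_cases => [[kk [i ->]]|[i ->]|->].
- exists (madd (ev (vidx kk i)) (ev (vidx kk i))), [:: ev (vidx kk i)]; split => //.
  by move=> u; rewrite inE => /eqP ->; rewrite mdeg_madd !mdeg_ev.
- eexists; eexists; split; first by [].
  by move=> u; rewrite !inE => /or3P [] /eqP ->; rewrite mdeg_madd !mdeg_ev.
- by exists (zprod n), [::].
Qed.

Lemma psum_eq_head (hs1 hs2 : seq M) : hs1 \in HS n -> hs2 \in HS n ->
  (forall m, psum hs1 m = psum hs2 m) -> head (mone _) hs1 = head (mone _) hs2.
Proof.
move=> /HS_head [h1 [L1 [-> H1]]] /HS_head [h2 [L2 [-> H2]]] E /=.
have A : h1 \in h2 :: L2.
  by apply: psum_neq0_mem; rewrite -E psum_head // oner_eq0.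
have B : h2 \in h1 :: L1.
  by apply: psum_neq0_mem; rewrite E psum_head // oner_eq0.
move: A B; rewrite !inE => /orP [/eqP -> //|/H2 A] /orP [/eqP -> //|/H1 B].
by have := ltn_trans A B; rewrite ltnn.
Qed.

Definition js : seq 'I_6 := [:: @Ordinal 6 0 isT; @Ordinal 6 1 isT; @Ordinal 6 2 isT;
  @Ordinal 6 3 isT].
Definition w2 : {ffun 'I_n -> 'I_3} := [ffun => k2].
Definition Tlist : seq (TT n) :=
  [seq inl (j, i) | j <- js, i <- enum 'I_n] ++ [:: inr w2].

Lemma Tlist_uniq : uniq Tlist.
Proof.
rewrite /Tlist cat_uniq; apply/and3P; split => //.
  apply: allpairs_uniq => //; first exact: enum_uniq.
  by move=> [a b] [c d] _ _ /= [-> ->].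
rewrite has_seq1; apply/negP => /allpairsP [[j i] [_ _]] //.
Qed.

Lemma heads_HS : map (head (mone _)) (HS n) = map (@Phi n) Tlist.
Proof.
rewrite /HS /Tlist /vars !map_cat -!map_comp /= cats0 -!catA.
have -> : zprod n = Pw w2.
  by rewrite /zprod /Pw; apply: eq_bigr => i _; rewrite mz_ev ffunE.
congr (_ ++ (_ ++ (_ ++ (_ ++ _)))); apply: eq_map => i /=;
  by rewrite /pa /pb /= ?mx_ev ?my_ev ?mz_ev.
Qed.

Lemma Hn_inj : injective (fun i : 'I_(size (Hn n)) => nth (pzero (3 * n)) (Hn n) i).
Proof.
move=> i j /= E.
have Hi : (i < size (HS n))%N by rewrite size_HS.
have Hj : (j < size (HS n))%N by rewrite size_HS.
have E2 : forall m, psum (nth [::] (HS n) i) m = psum (nth [::] (HS n) j) m.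
  by move=> m; rewrite -!nth_Hn // E.
have E3 := psum_eq_head (mem_nth _ Hi) (mem_nth _ Hj) E2.
have U : uniq (map (head (mone _)) (HS n)).
  by rewrite heads_HS (map_inj_uniq (@Phi_inj n hn)) Tlist_uniq.
apply/val_inj => /=; apply/eqP; rewrite -(nth_uniq (mone _) _ _ U) ?size_map //.
by rewrite !(nth_map [::]) // E3.
Qed.

Lemma mdeg_zprod : mdeg (zprod n) = n.
Proof.
have H0 : mdeg (mone (3 * n)) = 0%N by rewrite /mdeg big1 // => j _; rewrite ffunE.
rewrite /zprod (big_morph (@mdeg _) (@mdeg_madd _) H0).
by rewrite (eq_bigr (fun _ => 1%N)) ?sum1_card ?card_ord // => i _; rewrite mz_ev mdeg_ev.
Qed.

Lemma gen_props p : pin p (Hn n) ->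
  [/\ deg_le p (maxn n 2), terms_le p 4 & forall m, p m = 0 \/ p m = 1].
Proof.
move=> [i <-]; rewrite nth_Hn ?size_HS //.
have Hhs : nth [::] (HS n) i \in HS n by apply: mem_nth; rewrite size_HS.
split; last by move=> m; exact: F2_01.
- move=> m /psum_neq0_mem; case/HS_cases: Hhs => [[kk [i0 ->]]|[i0 ->]|->].
  + rewrite !inE => /orP [] /eqP ->; rewrite ?mdeg_madd !mdeg_ev leq_max; lia.
  + rewrite !inE => /or4P [] /eqP ->; rewrite ?mdeg_madd !mdeg_ev leq_max; lia.
  + by rewrite inE => /eqP ->; rewrite mdeg_zprod leq_maxl.
- exists (nth [::] (HS n) i); split; last by move=> m /psum_neq0_mem.
  by case/HS_cases: Hhs => [[kk [i0 ->]]|[i0 ->]|->].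
Qed.

End Gens2.

Theorem mainTheorem5 (n : nat) (hn : (1 < n)%N) :
  [/\ size (Hn n) = (4 * n + 1)%N,
      injective (fun i : 'I_(size (Hn n)) => nth (pzero (3 * n)) (Hn n) i),
      (forall p, pin p (Hn n) ->
         [/\ deg_le p (maxn n 2), terms_le p 4
           & forall m, p m = 0%R \/ p m = 1%R]),
      (forall s, pin s (Sn n) -> pin s (Hn n))
    & (forall le : rel (mon (3 * n)), admissible le -> total_degree le ->
         forall G : seq (mpoly (3 * n)), is_groebner le (Hn n) G ->
           at_least (6 * n + 3 ^ n) G)].
Proof.
split.
- exact: size_Hn.
- exact: Hn_inj.
- exact: gen_props.
- move=> s [i <-].
  have Hi : (i < size (Hn n))%N by rewrite /Hn size_cat ltn_addr.
  by exists (Ordinal Hi); rewrite /= /Hn nth_cat ltn_ord.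
- exact: gb_bound.
Qed.
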